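(* Let $n>2k>0$ be integers and suppose that $\mathcal G\subset\binom{[n-1]}{k-1}$ and $\mathcal H\subset\binom{[n-1]}{k}$ are cross-intersecting and $|\mathcal G|>\binom{n-1}{k-1}-\binom{n-k}{k-1}$. Then $|\mathcal H|\le k-1$.
   Context: $[m]=\{1,\dots,m\}$ and $\binom{[m]}{t}$ is the collection of all $t$-element subsets of $[m]$. Two families $\mathcal G,\mathcal H$ are cross-intersecting if $G\cap H\neq\emptyset$ for all $G\in\mathcal G$, $H\in\mathcal H$. *)

(* Defs.v *)
From mathcomp Require Import all_boot.
Set Implicit Arguments. Unset Strict Implicit. Unset Printing Implicit Defensive.

(* Ground set [m] is modelled by the finite type 'I_m = {0,...,m-1}. *)

Definition uniform_family (m t : nat) (F : {set {set 'I_m}}) : Prop :=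
  forall A, A \in F -> #|A| = t.

Definition cross_intersecting (m : nat) (G H : {set {set 'I_m}}) : Prop :=
  forall A B, A \in G -> B \in H -> A :&: B != set0.

(* Main.v *)
Require Import Defs.
From mathcomp Require Import all_boot.
From mathcomp Require Import zify.

Set Implicit Arguments. Unset Strict Implicit. Unset Printing Implicit Defensive.

Lemma hockey r K : \sum_(j < K.+1) 'C(r + K - j, K - j) = 'C(r + K.+1, K).
Proof.
elim: K => [|K IH].
  by rewrite big_ord_recl big_ord0 /= !bin0.
rewrite big_ord_recl /= subn0.
have -> : \sum_(i < K.+1) 'C(r + K.+1 - bump 0 i, K.+1 - bump 0 i)
        = \sum_(i < K.+1) 'C(r + K - i, K - i).
  apply: eq_bigr => i _; rewrite /bump /= add1n addnS !subSS //.
rewrite IH !addnS binS addnC //.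
Qed.

Lemma bin_mono a b t t' : b <= a -> t <= t' -> t' <= b ->
  'C(a - t', b - t') <= 'C(a - t, b - t).
Proof.
move=> ba tt tb.
rewrite -(bin_sub (_ : b - t' <= a - t')); last by lia.
rewrite -(bin_sub (_ : b - t <= a - t)); last by lia.
have -> : a - t' - (b - t') = a - b by lia.
have -> : a - t - (b - t) = a - b by lia.
apply: leq_bin2l; lia.
Qed.

Section Main.
Variable T : finType.
Variable k : nat.
Variable x0 : T.
Hypothesis hkT : k.-1 <= #|T| - k.

Definition Miss (S : {set {set T}}) : {set {set T}} :=
  [set F : {set T} | (#|F| == k.-1) && [exists B in S, [disjoint F & B]]].

Lemma miss_lb s : forall S : {set {set T}}, #|S| = s -> s <= k ->
  (forall B, B \in S -> #|B| = k) ->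
  \sum_(j < s) 'C(#|T| - k - j, k.-1 - j) <= #|Miss S|.
Proof.
elim: s => [|s IH] S cS sk hS; first by rewrite big_ord0.
have : 0 < #|S| by rewrite cS.
rewrite card_gt0 => /set0Pn [A AS].
set S' := S :\ A.
have cS' : #|S'| = s by move: (cardsD1 A S); rewrite AS cS add1n => -[].
have hS' : forall B, B \in S' -> #|B| = k.
  by move=> B; rewrite in_setD1 => /andP [_ /hS].
have IH' := IH S' cS' (ltnW sk) hS'.
rewrite big_ord_recr /=.
pose fy (B : {set T}) := odflt x0 [pick z in B :\: A].
pose Y := [set fy B | B in S'].
have hfy : forall B, B \in S' -> fy B \in B :\: A.
  move=> B BS'.
  have [z Hz] : exists z, z \in B :\: A.
    case: (boolP [exists z, z \in B :\: A]) => [/existsP//|Hn]; exfalso.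
    have BA : B \subset A.
      apply/subsetP => x xB; apply/negPn/negP => xA.
      by move/existsP: Hn; apply; exists x; rewrite in_setD xA xB.
    have eBA : B = A by apply/eqP; rewrite eqEcard BA (hS A AS) (hS' B BS') leqnn.
    by move: BS'; rewrite eBA in_setD1 eqxx.
  rewrite /fy; case: pickP => [z' //|/(_ z)]; by rewrite Hz.
have YA : forall y, y \in Y -> y \notin A.
  move=> y /imsetP [B BS' ->]; move: (hfy B BS'); rewrite in_setD => /andP[] //.
have cY : #|Y| <= s by rewrite -cS'; apply: leq_imset_card.
pose C := ~: (A :|: Y).
pose D := [set Z : {set T} | Z \subset C & #|Z| == k.-1 - #|Y|].
pose N := [set Y :|: Z | Z in D].
have cN : #|N| = 'C(#|C|, k.-1 - #|Y|).
  rewrite /N card_in_imset; first by rewrite cards_draws.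
  move=> Z1 Z2; rewrite !inE => /andP[Z1C _] /andP[Z2C _] e.
  apply/setP => x.
  have : (x \in Y :|: Z1) = (x \in Y :|: Z2) by rewrite e.
  rewrite !in_setU; case xY: (x \in Y) => //= _.
  have n1 : x \notin Z1 by apply/negP => /(subsetP Z1C); rewrite !inE xY orbT.
  have n2 : x \notin Z2 by apply/negP => /(subsetP Z2C); rewrite !inE xY orbT.
  by rewrite (negbTE n1) (negbTE n2).
have AY0 : A :&: Y = set0.
  apply/setP=> x; rewrite !inE; case xY: (x \in Y); last by rewrite andbF.
  by rewrite (negbTE (YA x xY)).
have cC : #|C| = #|T| - k - #|Y|.
  have := cardsC (A :|: Y); rewrite cardsU AY0 cards0 subn0 (hS A AS) => <-.
  rewrite /C; lia.
have bound : 'C(#|T| - k - s, k.-1 - s) <= #|N|.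
  rewrite cN cC; apply: bin_mono => //; lia.
have NM : N \subset Miss S.
  apply/subsetP => F /imsetP [Z]; rewrite inE => /andP [ZC /eqP cZ] ->.
  have YZ0 : Y :&: Z = set0.
    apply/setP=> x; rewrite !inE; case xY: (x \in Y) => //=.
    by apply/negP => /(subsetP ZC); rewrite !inE xY orbT.
  rewrite inE; apply/andP; split.
    rewrite cardsU YZ0 cards0 subn0 cZ; apply/eqP; lia.
  apply/existsP; exists A; rewrite AS /= -setI_eq0; apply/eqP/setP => x.
  rewrite !inE; case xA: (x \in A); rewrite ?andbF //= andbT.
  have nY : x \notin Y by apply/negP => /YA; rewrite xA.
  have nZ : x \notin Z by apply/negP => /(subsetP ZC); rewrite !inE xA.
  by rewrite (negbTE nY) (negbTE nZ).
have MN0 : Miss S' :&: N = set0.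
  apply/setP => F; rewrite !inE.
  apply/negbTE/negP => /andP [/andP [_ /existsP [B /andP [BS' dFB]]] /imsetP [Z _ eF]].
  move: dFB; rewrite -setI_eq0 => /eqP/setP/(_ (fy B)); rewrite !inE.
  have -> : fy B \in F by rewrite eF in_setU; apply/orP; left; apply: imset_f.
  by move: (hfy B BS'); rewrite in_setD => /andP[_ ->].
have MM : Miss S' \subset Miss S.
  apply/subsetP => F; rewrite !inE => /andP [-> /existsP [B /andP [BS' dFB]]] /=.
  apply/existsP; exists B; rewrite dFB andbT.
  by move: BS'; rewrite in_setD1 => /andP[_ ->].
apply: leq_trans (leq_add IH' bound) _.
have := cardsU (Miss S') N; rewrite MN0 cards0 subn0 => <-.
by apply: subset_leq_card; rewrite subUset MM NM.
Qed.
End Main.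

Theorem corollary2p1 (n k : nat) (G H : {set {set 'I_(n.-1)}}) :
  0 < k -> 2 * k < n ->
  uniform_family (k.-1) G -> uniform_family k H ->
  cross_intersecting G H ->
  'C(n.-1, k.-1) - 'C(n - k, k.-1) < #|G| ->
  #|H| <= k.-1.
Proof.
move=> k0 nk uG uH cGH hG.
rewrite leqNgt; apply/negP => hH.
have m0 : 0 < n.-1 by lia.
pose x0 : 'I_(n.-1) := Ordinal m0.
have hkT : k.-1 <= #|'I_(n.-1)| - k by rewrite card_ord; lia.
have : 0 < #|[set S : {set {set 'I_(n.-1)}} | S \subset H & #|S| == k]|.
  by rewrite cards_draws bin_gt0; lia.
rewrite card_gt0 => /set0Pn [S]; rewrite inE => /andP [SH /eqP cS].
have hS : forall B, B \in S -> #|B| = k by move=> B /(subsetP SH) /uH.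
have L := @miss_lb _ k x0 hkT k S cS (leqnn k) hS.
have Hsum : \sum_(j < k) 'C(#|'I_(n.-1)| - k - j, k.-1 - j) = 'C(n - k, k.-1).
  case: k k0 nk {uG uH hG hH hkT cS hS L} => [//|K] _ nK.
  rewrite /=; have -> : n - K.+1 = n.-1 - K.+1 - K + K.+1 by lia.
  rewrite -(hockey (n.-1 - K.+1 - K) K).
  apply: eq_bigr => j _; rewrite card_ord; congr 'C(_, _).
  have := ltn_ord j; lia.
rewrite Hsum in L.
pose Lv := [set F : {set 'I_(n.-1)} | #|F| == k.-1].
have MS : Miss k S \subset Lv by apply/subsetP => F; rewrite !inE => /andP[].
have GL : G \subset Lv :\: Miss k S.
  apply/subsetP => F FG; rewrite !inE uG // eqxx /= andbT.
  apply/negP => /existsP [B /andP [BS dFB]].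
  by move: (cGH F B FG (subsetP SH B BS)); rewrite setI_eq0 dFB.
have cD : #|Lv :\: Miss k S| = 'C(n.-1, k.-1) - #|Miss k S|.
  by rewrite cardsD (setIidPr MS) /Lv card_draws card_ord.
have h1 := subset_leq_card GL; rewrite cD in h1.
have h2 := leq_sub2l ('C(n.-1, k.-1)) L.
by have := leq_trans h1 h2; rewrite leqNgt hG.
Qed.
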